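(* For any finite group $G$, we have $\alpha_{G,n}\sim |Z(G)|\,|G|^{n-1}$ and $\beta_{G,n}\sim C a^n$ as $n\to\infty$, where $a$ is the maximal cardinality of an abelian subgroup of $G$ and $C$ is some positive constant (depending on $G$). Here $a_n\sim b_n$ means $\lim_{n\to\infty}a_n/b_n=1$.
   Context: For a finite group $G$ and an integer $n\ge 0$, $G$ acts on $G^n$ by simultaneous conjugation $g\cdot(x_1,\dots,x_n)=(gx_1g^{-1},\dots,gx_ng^{-1})$. Let $G^{(n)}=\{(x_1,\dots,x_n)\in G^n : x_ix_j=x_jx_i \text{ for all } 1\le i,j\le n\}$, which is stable under this action. Let $\alpha_{G,n}$ be the number of $G$-orbits on $G^n$ and $\beta_{G,n}$ the number of $G$-orbits on $G^{(n)}$. $Z(G)$ denotes the center of $G$. *)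

(* Defs.v *)
From HB Require Import structures.
From mathcomp Require Import all_boot all_order all_algebra all_fingroup all_solvable.
Set Implicit Arguments.
Unset Strict Implicit.
Unset Printing Implicit Defensive.

Local Open Scope group_scope.

Section Defs.
Variable gT : finGroupType.
Implicit Types (G : {group gT}) (n : nat).

Definition tuplesG G n : {set {ffun 'I_n -> gT}} :=
  [set x : {ffun 'I_n -> gT} | [forall i, x i \in G]].

Definition ctuplesG G n : {set {ffun 'I_n -> gT}} :=
  [set x : {ffun 'I_n -> gT} in tuplesG G n | [forall i, forall j, x i * x j == x j * x i]].

Definition conj_tuple n (x : {ffun 'I_n -> gT}) (g : gT) : {ffun 'I_n -> gT} :=
  [ffun i => x i ^ g].

Definition sconj_orbit G n (x : {ffun 'I_n -> gT}) : {set {ffun 'I_n -> gT}} :=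
  [set conj_tuple x g | g in G].

Definition num_orbits G n (S : {set {ffun 'I_n -> gT}}) : nat :=
  #|[set sconj_orbit G x | x in S]|.

Definition alpha G n : nat := num_orbits G (tuplesG G n).
Definition beta G n : nat := num_orbits G (ctuplesG G n).

Definition max_abelian_card G : nat :=
  \max_(H : {group gT} | (H \subset G) && abelian H) #|H|.
End Defs.

(* Main.v *)
Require Import Defs.
From HB Require Import structures.
From mathcomp Require Import all_boot all_order all_algebra all_fingroup all_solvable.
From mathcomp Require Import all_classical all_reals all_analysis.
From mathcomp Require Import ring zify.
Import Order.TTheory GRing.Theory Num.Theory.
Import numFieldNormedType.Exports.

Section Comb.
Local Set Implicit Arguments.
Local Unset Strict Implicit.
Local Open Scope group_scope.
Variable gT : finGroupType.
Variable n : nat.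
Local Notation tT := {ffun 'I_n -> gT}.

Lemma conj_tuple1 : (@conj_tuple gT n)^~ 1 =1 id.
Proof. by move=> x; apply/ffunP=> i; rewrite ffunE conjg1. Qed.
Lemma conj_tupleM (x : tT) : act_morph (@conj_tuple gT n) x.
Proof. by move=> a b; apply/ffunP=> i; rewrite !ffunE conjgM. Qed.
Definition sconj := TotalAction conj_tuple1 conj_tupleM.

Lemma burnside (G : {group gT}) (S : {set tT}) : [acts G, on S | sconj] ->
  (num_orbits G S * #|G| = \sum_(g in G) #|'Fix_(S | sconj)[g]|)%N.
Proof. by move=> h; rewrite (Frobenius_Cauchy h). Qed.

Lemma in_fix (S : {set tT}) g x :
  (x \in 'Fix_(S | sconj)[g]) = (x \in S) && [forall i, g \in 'C[x i]].
Proof.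
rewrite inE; congr andb; apply/afix1P/forallP => [h i|h].
  have := congr1 (fun f : tT => f i) h; rewrite /= ffunE => e.
  by apply/cent1P; rewrite /commute (conjgC (x i)) e.
apply/ffunP=> i; rewrite /= ffunE; have /cent1P c := h i.
by rewrite conjgE -c mulgA mulVg mul1g.
Qed.

Lemma acts_tuples (G : {group gT}) : [acts G, on tuplesG G n | sconj].
Proof.
apply/actsP=> g Gg x; rewrite !inE; apply/forallP/forallP => h i.
  by have := h i; rewrite /= ffunE groupJr.
by rewrite /= ffunE groupJ.
Qed.

Lemma acts_ctuples (G : {group gT}) : [acts G, on ctuplesG G n | sconj].
Proof.
apply/actsP=> g Gg x; rewrite !inE.
have -> : [forall i, (sconj x g) i \in G] = [forall i, x i \in G].
  by apply/forallP/forallP => h i; [have := h i|]; rewrite /= ffunE ?groupJr ?groupJ.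
congr andb; apply/forallP/forallP => h i; apply/forallP => j; have /forallP/(_ j) := h i;
  rewrite /= !ffunE -!conjMg => /eqP; [by move/conjg_inj->|by move->].
Qed.

Lemma expn_mono m k e : (m <= k)%N -> (m ^ e <= k ^ e)%N.
Proof. by case: e => [|e] // h; rewrite leq_exp2r. Qed.

Lemma sum_le_const_in (I : finType) (A : {set I}) (P : pred I) (F : I -> nat) c :
  (forall i, i \in A -> P i -> F i <= c)%N -> (\sum_(i in A | P i) F i <= #|A| * c)%N.
Proof.
move=> h; apply: (@leq_trans (\sum_(i in A | P i) c)).
  by apply: leq_sum => i /andP[]; apply: h.
rewrite sum_nat_const leq_mul2r; apply/orP; right.
by apply: subset_leq_card; apply/fintype.subsetP=> i /andP[].
Qed.

Lemma fix_tuples (G : {group gT}) g :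
  #|'Fix_(tuplesG G n | sconj)[g]| = (#|'C_G[g]| ^ n)%N.
Proof.
rewrite -[in RHS](card_ord n) -card_ffun_on; apply: eq_card => x.
rewrite in_fix inE; apply/andP/ffun_onP => [[/forallP h1 /forallP h2] i | h].
  by rewrite inE h1 cent1C h2.
by split; apply/forallP=> i; have := h i; rewrite inE cent1C => /andP[].
Qed.

Lemma alpha_sum (G : {group gT}) :
  (alpha G n * #|G| = \sum_(g in G) #|'C_G[g]| ^ n)%N.
Proof.
rewrite /alpha burnside ?acts_tuples //; apply: eq_bigr => g _; exact: fix_tuples.
Qed.

Lemma alpha_bounds (G : {group gT}) :
  (#|'Z(G)| * #|G| ^ n <= alpha G n * #|G|)%N /\
  (alpha G n * #|G| <= #|'Z(G)| * #|G| ^ n + #|G| * #|G|.-1 ^ n)%N.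
Proof.
rewrite alpha_sum (bigID (fun g => g \in 'Z(G))) /=.
have eZ : (\sum_(g in G | g \in 'Z(G)) #|'C_G[g]| ^ n = #|'Z(G)| * #|G| ^ n)%N.
  rewrite -sum_nat_const; apply: eq_big => g.
    by apply/andP/idP => [[]//|Zg]; split=> //; apply: (fintype.subsetP (center_sub G)).
  case/andP=> Gg /centerP[_ cg]; have -> : 'C_G[g] = G; last done.
  by apply/finset.setIidPl/fintype.subsetP=> y Gy; apply/cent1P; apply/esym/cg.
rewrite eZ leq_addr; split=> //; rewrite leq_add2l; apply: sum_le_const_in => g Gg nZg.
apply: expn_mono; rewrite -ltnS (ltn_predK (cardG_gt0 G)); apply: proper_card.
rewrite finset.properEneq subsetIl andbT; apply: contra nZg => /eqP e.
apply/centerP; split=> // y Gy; apply/esym/cent1P.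
have : y \in 'C_G[g] by rewrite e.
by rewrite inE => /andP[].
Qed.

Definition gset (x : tT) : {set gT} := [set x i | i : 'I_n].
Definition genT (x : tT) : {group gT} := (<<gset x>>)%G.
Definition Sset (B : {set gT}) : {set tT} := [set x : tT | [forall i, x i \in B]].
Definition Ncnt (B : {group gT}) : nat := #|[set x : tT | genT x == B]|.

Lemma card_Sset (B : {set gT}) : #|Sset B| = (#|B| ^ n)%N.
Proof.
rewrite -[in RHS](card_ord n) -card_ffun_on; apply: eq_card => x.
rewrite inE; apply/forallP/ffun_onP => h i; exact: h.
Qed.

Lemma Sset_gen (B : {group gT}) x : (x \in Sset B) = (genT x \subset B).
Proof.
rewrite inE /genT /= gen_subG; apply/forallP/fintype.subsetP => [h y /imsetP[i _ ->]|h i].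
  exact: h.
by apply: h; apply: imset_f.
Qed.

Lemma Ncnt_le (B : {group gT}) : (Ncnt B <= #|B| ^ n)%N.
Proof.
rewrite -card_Sset; apply: subset_leq_card; apply/fintype.subsetP=> x.
by rewrite inE Sset_gen => /eqP->.
Qed.

Lemma card_bigcup_le (T I : finType) (P : pred I) (F : I -> {set T}) :
  (#|\bigcup_(i | P i) F i| <= \sum_(i | P i) #|F i|)%N.
Proof.
elim/big_rec2: _ => [|i m U _ leUm]; first by rewrite cards0.
by rewrite (leq_trans (leq_card_setU _ _).1) ?leq_add2l.
Qed.

Lemma sum_le_constP (I : finType) (P : pred I) (F : I -> nat) c :
  (forall i, P i -> F i <= c)%N -> (\sum_(i | P i) F i <= #|I| * c)%N.
Proof.
move=> h; apply: (@leq_trans (\sum_(i | P i) c)); first exact: leq_sum.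
rewrite big_mkcond /= -sum_nat_const; apply: leq_sum => i _.
by case: (P i).
Qed.

Lemma Ncnt_ge (B : {group gT}) :
  (#|B| ^ n <= Ncnt B + #|{group gT}| * #|B|.-1 ^ n)%N.
Proof.
rewrite -card_Sset.
have sub : Sset B \subset [set x : tT | genT x == B] :|:
   \bigcup_(C : {group gT} | C \proper B) Sset C.
  apply/fintype.subsetP=> x; rewrite Sset_gen => sxB; rewrite inE.
  case: (eqVneq (genT x) B) => [e|ne]; first by rewrite !inE e eqxx.
  apply/orP; right; apply/bigcupP; exists (genT x).
    by rewrite finset.properEneq ne sxB.
  by rewrite Sset_gen.
apply: (leq_trans (subset_leq_card sub)); apply: (leq_trans (leq_card_setU _ _).1).
rewrite leq_add2l; apply: (leq_trans (card_bigcup_le _ _)).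
apply: sum_le_constP => C pCB; rewrite card_Sset; apply: expn_mono.
by rewrite -ltnS (ltn_predK (cardG_gt0 B)); apply: proper_card.
Qed.

Lemma mem_genT (x : tT) i : x i \in genT x.
Proof. by apply: mem_gen; apply: imset_f. Qed.

Lemma beta_sum (G : {group gT}) :
  (beta G n * #|G| = \sum_(x in ctuplesG G n) #|'C_G(genT x)|)%N.
Proof.
rewrite /beta burnside ?acts_ctuples //.
transitivity (\sum_(g in G) \sum_(x in 'Fix_(ctuplesG G n | sconj)[g]) 1)%N.
  by apply: eq_bigr => g _; rewrite sum1_card.
rewrite (exchange_big_dep [in ctuplesG G n]) /= => [|g x _]; last first.
  by rewrite in_fix => /andP[].
apply: eq_bigr => x Tx; rewrite sum1dep_card; apply: eq_card => g.
rewrite finset.in_set in_fix Tx /= [in RHS]inE cent_gen -sub_cent1; congr andb.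
apply/forallP/fintype.subsetP => [h y /imsetP[i _ ->]|h i]; first by rewrite cent1C.
by rewrite cent1C; apply: h; apply: imset_f.
Qed.

Lemma beta_part (G : {group gT}) :
  (\sum_(x in ctuplesG G n) #|'C_G(genT x)| =
   \sum_(B : {group gT} | (B \subset G) && abelian B) Ncnt B * #|'C_G(B)|)%N.
Proof.
rewrite (partition_big genT (fun B : {group gT} => (B \subset G) && abelian B)) /=
  => [|x]; last first.
  rewrite !inE => /andP[/forallP TG /forallP TC].
  rewrite /genT /= gen_subG abelian_gen; apply/andP; split.
    by apply/fintype.subsetP=> y /imsetP[i _ ->].
  apply/centsP => y /imsetP[i _ ->] z /imsetP[j _ ->].
  by apply/esym/eqP; have /forallP := TC j; apply.
apply: eq_bigr => B /andP[sBG aB].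
transitivity (\sum_(x | (x \in ctuplesG G n) && (genT x == B)) #|'C_G(B)|)%N.
  by apply: eq_bigr => x /andP[_ /eqP e]; rewrite -e.
rewrite (eq_bigl (mem [set x : tT | genT x == B])) => [|x]; first by rewrite sum_nat_const.
rewrite !inE; case e: (genT x == B); rewrite ?andbF ?andbT //; move/eqP: e => e.
have Bi i : x i \in B by rewrite -e mem_genT.
apply/andP; split; apply/forallP => i; first exact: (fintype.subsetP sBG).
by apply/forallP => j; apply/eqP; apply: (centsP aB) (Bi i) _ (Bi j).
Qed.

Section BetaBounds.
Variable G : {group gT}.
Local Notation a := (max_abelian_card G).
Definition Aset : {set {group gT}} :=
  [set B : {group gT} | (B \subset G) && abelian B && (#|B| == a)].

Lemma abel_le_max (B : {group gT}) : B \subset G -> abelian B -> (#|B| <= a)%N.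
Proof.
move=> sBG aB; rewrite /max_abelian_card.
exact: (@leq_bigmax_cond _ (fun H : {group gT} => (H \subset G) && abelian H)
         (fun H : {group gT} => #|H|) B (introT andP (conj sBG aB))).
Qed.

Lemma max_cent (B : {group gT}) : B \in Aset -> 'C_G(B) = B.
Proof.
rewrite inE => /andP[/andP[sBG aB] /eqP cB].
apply/eqP; rewrite finset.eqEsubset; apply/andP; split; last by rewrite finset.subsetI sBG.
apply/fintype.subsetP => g /setIP[Gg cBg].
have sBH : B \subset (B <*> <[g]>)%G := joing_subl B <[g]>.
have aH : abelian (B <*> <[g]>)%G by rewrite /= abelianY aB cycle_abelian cycle_subG cBg.
have sHG : (B <*> <[g]>)%G \subset G by rewrite /= join_subG sBG cycle_subG Gg.
have le : (#|(B <*> <[g]>)%G| <= #|B|)%N by rewrite cB abel_le_max.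
have /eqP eBH : (B :==: (B <*> <[g]>)%G) by rewrite eqEcard sBH le.
by rewrite eBH; apply: (fintype.subsetP (joing_subr B <[g]>)); apply: cycle_id.
Qed.

Lemma Aset_gt0 : (0 < #|Aset|)%N.
Proof.
have h : (0 < #|(fun H : {group gT} => (H \subset G) && abelian H)|)%N.
  by apply/card_gt0P; exists 1%G; rewrite /in_mem /= sub1G abelian1.
have [B0 PB0 eB0] := eq_bigmax_cond (fun H : {group gT} => #|H|) h.
apply/card_gt0P; exists B0; rewrite inE.
move: PB0; rewrite /in_mem /= => ->; rewrite /max_abelian_card.
by apply/eqP; rewrite -eB0.
Qed.

Lemma a_gt0 : (0 < a)%N.
Proof. by apply: (leq_trans (cardG_gt0 1%G)); apply: abel_le_max; rewrite ?sub1G ?abelian1. Qed.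

Lemma beta_bounds :
  (#|Aset| * (a ^ n * a) <= beta G n * #|G| + #|Aset| * (#|{group gT}| * a.-1 ^ n * a))%N /\
  (beta G n * #|G| <= #|Aset| * (a ^ n * a) + #|{group gT}| * (a.-1 ^ n * #|G|))%N.
Proof.
rewrite beta_sum beta_part (bigID (fun B : {group gT} => #|B| == a)) /=.
set S2 := (\sum_(i | _ && ~~ _) _)%N.
have eS1 : (\sum_(B : {group gT} | ((B \subset G) && abelian B) && (#|B| == a)) Ncnt B * #|'C_G(B)|
   = \sum_(B in Aset) Ncnt B * a)%N.
  apply: eq_big => [B|B]; first by rewrite inE.
  
  by move=> AB; rewrite max_cent ?inE // ; case/andP: AB => _ /eqP->.
rewrite eS1; split.
  apply: (@leq_trans (\sum_(B in Aset) Ncnt B * a + #|Aset| * (#|{group gT}| * a.-1 ^ n * a)))%N;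
    last by rewrite leq_add2r leq_addr.
  rewrite -sum_nat_const -big_split /= -sum_nat_const; apply: leq_sum => B.
  rewrite inE => /andP[_ /eqP cB]; rewrite -mulnDl leq_mul2r; apply/orP; right.
  by have := Ncnt_ge B; rewrite cB.
rewrite -sum_nat_const; apply: leq_add.
  apply: leq_sum => B; rewrite inE => /andP[_ /eqP cB].
  by rewrite leq_mul2r -{2}cB Ncnt_le orbT.
apply: sum_le_constP => B /andP[/andP[sBG aB] neB].
apply: leq_mul; last by apply: subset_leq_card; apply: subsetIl.
apply: (leq_trans (Ncnt_le B)); apply: expn_mono.
have := abel_le_max sBG aB; rewrite leq_eqVlt (negbTE neB) /= => lt.
by rewrite -ltnS (ltn_predK lt).
Qed.
End BetaBounds.
End Comb.


Local Open Scope classical_set_scope.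
Local Open Scope ring_scope.

Lemma asym (R : realType) (X : nat -> nat) (M a K : nat) : (0 < M)%N -> (0 < a)%N ->
  (forall k, M * a ^ k <= X k + K * a.-1 ^ k)%N ->
  (forall k, X k <= M * a ^ k + K * a.-1 ^ k)%N ->
  (fun k => (X k)%:R / (M%:R * a%:R ^+ k) : R) @ \oo --> (1 : R).
Proof.
move=> M0 a0 lo hi.
set m : R := M%:R; set A : R := a%:R; set b : R := a.-1%:R; set kk : R := K%:R.
have m0 : 0 < m by rewrite ltr0n.
have A0 : 0 < A by rewrite ltr0n.
have b0 : 0 <= b by rewrite ler0n.
have bA : b < A by rewrite ltr_nat prednK.
set q := b / A; set c := kk / m.
have q1 : `|q| < 1.
  rewrite /q ger0_norm; last by rewrite divr_ge0 // ltW.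
  by rewrite ltr_pdivrMr // mul1r.
have Hq : (fun k => q ^+ k) @ \oo --> (0 : R) := cvg_expr q1.
have ecq k : c * q ^+ k = kk * b ^+ k / (m * A ^+ k).
  rewrite /c /q expr_div_n; field.
  by rewrite expf_neq0 ?(gt_eqF A0) // pnatr_eq0 -lt0n M0.
apply: (squeeze_cvgr (f := fun k => 1 - c * q ^+ k) (h := fun k => 1 + c * q ^+ k)).
- apply: nearW => k.
  have D0 : 0 < m * A ^+ k by rewrite mulr_gt0 // exprn_gt0.
  have lo' : m * A ^+ k <= (X k)%:R + kk * b ^+ k.
    by rewrite /m /A /b /kk -!natrX -!natrM -natrD ler_nat.
  have hi' : (X k)%:R <= m * A ^+ k + kk * b ^+ k.
    by rewrite /m /A /b /kk -!natrX -!natrM -natrD ler_nat.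
  rewrite ecq; apply/andP; split; rewrite -subr_ge0.
    have -> : (X k)%:R / (m * A ^+ k) - (1 - kk * b ^+ k / (m * A ^+ k))
      = ((X k)%:R + kk * b ^+ k - m * A ^+ k) / (m * A ^+ k).
      by field; rewrite expf_neq0 ?(gt_eqF A0) // pnatr_eq0 -lt0n M0.
    by rewrite divr_ge0 ?subr_ge0 // ltW.
  have -> : 1 + kk * b ^+ k / (m * A ^+ k) - (X k)%:R / (m * A ^+ k)
      = (m * A ^+ k + kk * b ^+ k - (X k)%:R) / (m * A ^+ k).
    by field; rewrite expf_neq0 ?(gt_eqF A0) // pnatr_eq0 -lt0n M0.
  by rewrite divr_ge0 ?subr_ge0 // ltW.
- have H1 : (fun k => 1 - c * q ^+ k) @ \oo --> (1 - c * 0 : R).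
    by apply: cvgB; [exact: cvg_cst | exact: cvgMl_tmp].
  by rewrite mulr0 subr0 in H1.
- have H1 : (fun k => 1 + c * q ^+ k) @ \oo --> (1 + c * 0 : R).
    by apply: cvgD; [exact: cvg_cst | exact: cvgMl_tmp].
  by rewrite mulr0 addr0 in H1.
Qed.

Theorem theorem3p1 (gT : finGroupType) (G : {group gT}) (R : realType) :
  ((fun n : nat => (alpha G n)%:R /
       ((#|('Z(G))%g|)%:R * (#|G|)%:R ^+ n / (#|G|)%:R) : R) @ \oo --> (1%R : R))
  /\ (exists C : R, 0 < C /\
       ((fun n : nat => (beta G n)%:R / (C * (max_abelian_card G)%:R ^+ n) : R)
          @ \oo --> (1%R : R))).
Proof.
split.
  have -> : (fun n : nat => (alpha G n)%:R /
       ((#|('Z(G))%g|)%:R * (#|G|)%:R ^+ n / (#|G|)%:R) : R) =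
       (fun n : nat => (alpha G n * #|G|)%N%:R / ((#|('Z(G))%g|)%:R * (#|G|)%:R ^+ n)).
    by apply: funext => k; rewrite natrM invf_div mulrA.
  apply: (@asym R _ _ _ #|G|) => [||k|k].
  - exact: (cardG_gt0 ('Z(G))%G).
  - exact: cardG_gt0.
  - have [lo _] := alpha_bounds k G; exact: (leq_trans lo (leq_addr _ _)).
  - by have [_ hi] := alpha_bounds k G.
set a := max_abelian_card G.
set m := #|Aset G|.
set K' := #|{group gT}|.
exists ((m * a)%N%:R / (#|G|)%:R); split.
  by rewrite divr_gt0 // ltr0n ?cardG_gt0 // muln_gt0 Aset_gt0 a_gt0.
have -> : (fun n : nat => (beta G n)%:R / ((m * a)%N%:R / (#|G|)%:R * a%:R ^+ n) : R) =
       (fun n : nat => (beta G n * #|G|)%N%:R / ((m * a)%N%:R * a%:R ^+ n)).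
  by apply: funext => k; rewrite mulrAC invf_div mulrA [in RHS]natrM.
apply: (@asym R _ _ _ (m * K' * a + K' * #|G|)%N) => [||k|k].
- by rewrite muln_gt0 Aset_gt0 a_gt0.
- exact: a_gt0.
- have [lo _] := beta_bounds k G; rewrite -/a -/m -/K' in lo.
  move: lo; set P := (a ^ k)%N; set Q := (a.-1 ^ k)%N; set X := (beta G k * #|G|)%N.
  by move=> lo; nia.
- have [_ hi] := beta_bounds k G; rewrite -/a -/m -/K' in hi.
  move: hi; set P := (a ^ k)%N; set Q := (a.-1 ^ k)%N; set X := (beta G k * #|G|)%N.
  by move=> hi; nia.
Qed.
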